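(* Let $k\ge 2$ be an integer. Let $M$ be an $n\times n$ matrix with entries in $\{0,\pm1,\pm2,\dots,\pm\lfloor k/2\rfloor\}$ satisfying $M^T=-M$ and $MM^T=mI$, where $m\equiv -1\pmod k$. Let $C_k(M)$ be the $\mathbb{Z}_k$-code of length $2n$ with generator matrix $(I\ \ M)$, entries read modulo $k$. Let $a,b,c,d$ be integers with $a\equiv d\pmod k$ and $b\equiv c\pmod k$. Then $C_k(M)$ is a self-dual $\mathbb{Z}_k$-code, $A_k(C_k(M))$ is a unimodular lattice, and the $2n$ rows of the matrix \[ F(M)=\frac{1}{\sqrt{k}}\begin{pmatrix} aI+bM & cI+dM\\ -cI+dM & aI-bM\end{pmatrix} \] form a $\frac{1}{k}(a^2+mb^2+c^2+md^2)$-frame of $A_k(C_k(M))$.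
   Context: A $\mathbb{Z}_k$-code of length $N$ is a $\mathbb{Z}_k$-submodule of $\mathbb{Z}_k^N$; it is self-dual if it equals its dual under the standard inner product. Construction A: with $\rho:\mathbb{Z}_k\to\mathbb{Z}$ sending $0,1,\dots,k-1$ to $0,1,\dots,k-1$, for a $\mathbb{Z}_k$-code $C$ of length $N$ set $A_k(C)=\frac{1}{\sqrt{k}}\{\rho(C)+k\mathbb{Z}^N\}$. A lattice $L$ is unimodular if $L=L^*$ where $L^*=\{x:(x,y)\in\mathbb{Z}\ \forall y\in L\}$. For a lattice $L$ in dimension $N$, a set $\{f_1,\dots,f_N\}$ of vectors of $L$ with $(f_i,f_j)=t\,\delta_{i,j}$ is called a $t$-frame of $L$. *)

(* Defs.v *)
From HB Require Import structures.
From mathcomp Require Import all_boot all_order all_algebra.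
From mathcomp Require Import reals.
Set Implicit Arguments. Unset Strict Implicit. Unset Printing Implicit Defensive.
Import Order.TTheory GRing.Theory Num.Theory.
Local Open Scope ring_scope.

Definition zk_dot (k N : nat) (x y : 'rV['Z_k]_N) : 'Z_k :=
  \sum_(i < N) x 0 i * y 0 i.

Definition is_Zk_code (k N : nat) (C : {set 'rV['Z_k]_N}) : Prop :=
  0 \in C /\ (forall x y, x \in C -> y \in C -> x + y \in C) /\
  (forall (a : 'Z_k) x, x \in C -> a *: x \in C).

Definition dual_code (k N : nat) (C : {set 'rV['Z_k]_N}) : {set 'rV['Z_k]_N} :=
  [set x | [forall y in C, zk_dot x y == 0]].

Definition self_dual (k N : nat) (C : {set 'rV['Z_k]_N}) : Prop :=
  C = dual_code C.

Definition gen_code (k r N : nat) (G : 'M['Z_k]_(r, N)) : {set 'rV['Z_k]_N} :=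
  [set u *m G | u : 'rV['Z_k]_r].

Definition rho (k : nat) (x : 'Z_k) : int := (nat_of_ord x)%:Z.

Definition constructionA (R : realType) (k N : nat) (C : {set 'rV['Z_k]_N})
  (x : 'rV[R]_N) : Prop :=
  exists2 c, c \in C &
    exists z : 'rV[int]_N,
      x = (Num.sqrt (k%:R : R))^-1 *:
            map_mx (fun t : int => t%:~R : R) (map_mx (@rho k) c + (k%:Z) *: z).

Definition dotR (R : realType) (N : nat) (x y : 'rV[R]_N) : R :=
  \sum_(i < N) x 0 i * y 0 i.

Definition unimodular (R : realType) (N : nat) (L : 'rV[R]_N -> Prop) : Prop :=
  forall x, L x <-> (forall y, L y -> dotR x y \is a Num.int).

Definition is_frame (R : realType) (N : nat) (L : 'rV[R]_N -> Prop) (t : R)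
  (f : 'I_N -> 'rV[R]_N) : Prop :=
  (forall i, L (f i)) /\
  (forall i j, dotR (f i) (f j) = if i == j then t else 0).

(* Main.v *)
Require Import Defs.
From HB Require Import structures.
From mathcomp Require Import all_boot all_order all_algebra.
From mathcomp Require Import reals.
From mathcomp Require Import ring.
Set Implicit Arguments. Unset Strict Implicit.
Import Order.TTheory GRing.Theory Num.Theory.
Local Open Scope ring_scope.

Lemma q0_nat p (n : nat) : ((n%:R : 'Z_(p.+2)) == 0) = (p.+2 %| n)%N.
Proof. by rewrite -val_eqE /= val_Zp_nat. Qed.
Lemma q0 p (t : int) : ((t%:~R : 'Z_(p.+2)) == 0) = (p.+2 %| t)%Z.
Proof.
case: t => [n|n].
- by rewrite -pmulrn q0_nat.
- by rewrite NegzE intrN oppr_eq0 -pmulrn q0_nat dvdzE abszN.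
Qed.
Lemma q_mod p (x y : int) : (x = y %[mod p.+2])%Z -> (x%:~R : 'Z_(p.+2)) = y%:~R.
Proof.
by move=> /eqP; rewrite eqz_mod_dvd -q0 intrB subr_eq0 => /eqP.
Qed.
Lemma qrho p (c : 'Z_(p.+2)) : ((Posz (nat_of_ord c))%:~R : 'Z_(p.+2)) = c.
Proof. by rewrite -pmulrn natr_Zp. Qed.
Lemma rhoq p (t : int) : Posz (nat_of_ord (t%:~R : 'Z_(p.+2))) = (t %% p.+2)%Z.
Proof.
have h : (0 <= t %% p.+2)%Z by apply: modz_ge0.
have hlt : (t %% p.+2 < p.+2)%Z by apply: ltz_pmod.
rewrite -(gez0_abs h) in hlt *.
set n := `|(t %% p.+2)%Z|%N in hlt *.
have -> : (t%:~R : 'Z_(p.+2)) = n%:R.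
  rewrite pmulrn; apply: q_mod.
  by rewrite /n gez0_abs // modz_mod.
by congr Posz; rewrite val_Zp_nat // modn_small.
Qed.

Lemma qK p : ((Posz p.+2)%:~R : 'Z_(p.+2)) = 0.
Proof. by apply/eqP; rewrite q0. Qed.

Definition zkdot_mx (R : pzRingType) N (x y : 'rV[R]_N) :
  \sum_(i < N) x 0 i * y 0 i = (x *m y^T) 0 0.
Proof. by rewrite !mxE; apply: eq_bigr => i _; rewrite !mxE. Qed.

Lemma Mk_facts p n (M : 'M[int]_n) (m : int) :
  M^T = - M -> M *m M^T = m%:M -> (m = -1 %[mod (p.+2)%:Z])%Z ->
  let Mk : 'M['Z_(p.+2)]_n := map_mx (fun t : int => t%:~R) M in
  [/\ Mk^T = - Mk, Mk *m Mk^T = - 1%:M & Mk *m Mk = 1%:M].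
Proof.
move=> hT hM hm Mk.
have h1 : Mk^T = - Mk by rewrite /Mk map_trmx hT map_mxN.
have h2 : Mk *m Mk^T = - 1%:M.
  rewrite /Mk map_trmx -map_mxM hM map_scalar_mx /=. rewrite (@q_mod p _ _ hm).
  by rewrite intrN raddfN.
split=> //.
by rewrite -[Mk *m Mk]opprK -mulmxN -h1 h2 opprK.
Qed.
Lemma in_gen k r N (G : 'M['Z_k]_(r, N)) x :
  reflect (exists u, x = u *m G) (x \in gen_code G).
Proof.
apply: (iffP imsetP) => [[u _ ->]|[u ->]]; first by exists u.
by exists u.
Qed.

Lemma zk_dotE k N (x y : 'rV['Z_k]_N) : zk_dot x y = (x *m y^T) 0 0.
Proof. by rewrite /zk_dot !mxE; apply: eq_bigr => i _; rewrite !mxE. Qed.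

Lemma code_props k n (Mk : 'M['Z_k]_n) :
  Mk^T = - Mk -> Mk *m Mk^T = - 1%:M -> Mk *m Mk = 1%:M ->
  is_Zk_code (gen_code (row_mx 1%:M Mk)) /\ self_dual (gen_code (row_mx 1%:M Mk)).
Proof.
move=> h1 h2 h3.
set G := row_mx 1%:M Mk.
have GG : G *m G^T = 0.
  by rewrite /G tr_row_mx mul_row_col trmx1 mulmx1 h2 subrr.
split.
  split; first by apply/in_gen; exists 0; rewrite mul0mx.
  split.
    move=> x y /in_gen[u ->] /in_gen[v ->]; apply/in_gen; exists (u + v).
    by rewrite mulmxDl.
  move=> a x /in_gen[u ->]; apply/in_gen; exists (a *: u).
  by rewrite scalemxAl.
apply/setP => x; rewrite inE; apply/idP/forall_inP.
  move=> /in_gen[u ->] y /in_gen[v ->].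
  by rewrite zk_dotE trmx_mul mulmxA -(mulmxA u) GG mulmx0 mul0mx mxE.
move=> H.
have HG : x *m G^T = 0.
  apply/matrixP => i j; rewrite (ord1 i) [RHS]mxE.
  have := H (row j G); rewrite zk_dotE.
  have -> : (x *m (row j G)^T) 0 0 = (x *m G^T) 0 j.
    by rewrite !mxE; apply: eq_bigr => l _; rewrite !mxE.
  move=> /(_ _)/eqP; apply; apply/in_gen; exists (delta_mx 0 j).
  by rewrite -rowE.
rewrite -(hsubmxK x) in HG *.
move: HG; rewrite /G tr_row_mx mul_row_col trmx1 mulmx1 h1 mulmxN => /eqP; rewrite subr_eq0 => /eqP e.
apply/in_gen; exists (lsubmx x).
by rewrite mul_mx_row mulmx1 e -mulmxA h3 mulmx1.
Qed.

Definition EE (T : comNzRingType) n (M : 'M[T]_n) (s u : T) : 'M[T]_n := s *: 1%:M + u *: M.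

Lemma EEM (T : comNzRingType) n (M : 'M[T]_n) m a b c d :
  M *m M = (- m) *: 1%:M ->
  EE M a b *m EE M c d = EE M (a * c - m * (b * d)) (a * d + b * c).
Proof.
move=> hM; rewrite /EE mulmxDl !mulmxDr -!scalemxAl -!scalemxAr !mul1mx !mulmx1 hM.
rewrite !scalerA !scalerDl addrA -!addrA; congr (_ + _).
rewrite addrC -!addrA addrC -!addrA; congr (_ + _).
by congr (_ *: _); ring.
Qed.

Lemma EED (T : comNzRingType) n (M : 'M[T]_n) a b c d :
  EE M a b + EE M c d = EE M (a + c) (b + d).
Proof.
rewrite /EE !scalerDl -!addrA; congr (_ + _).
by rewrite addrC -!addrA; congr (_ + _); rewrite addrC.
Qed.

Lemma EET (T : comNzRingType) n (M : 'M[T]_n) a b :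
  M^T = - M -> (EE M a b)^T = EE M a (- b).
Proof.
by move=> hT; rewrite /EE linearD /= !linearZ /= trmx1 hT scalerN scaleNr.
Qed.

Lemma EE_map (T S : comNzRingType) (f : {rmorphism T -> S}) n (M : 'M[T]_n) a b :
  map_mx f (EE M a b) = EE (map_mx f M) (f a) (f b).
Proof. by rewrite /EE map_mxD !map_mxZ map_mx1. Qed.

Definition BB (T : comNzRingType) n (M : 'M[T]_n) a b c d : 'M[T]_(n + n) :=
  block_mx (EE M a b) (EE M c d) (EE M (- c) d) (EE M a (- b)).

Lemma BB_gram (T : comNzRingType) n (M : 'M[T]_n) m a b c d :
  M^T = - M -> M *m M^T = m *: 1%:M ->
  BB M a b c d *m (BB M a b c d)^T =
    (a ^+ 2 + m * b ^+ 2 + c ^+ 2 + m * d ^+ 2) *: 1%:M.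
Proof.
move=> hT hM.
have hMM : M *m M = (- m) *: 1%:M.
  have e : M *m M^T = - (M *m M) by rewrite hT mulmxN.
  by rewrite -[M *m M]opprK -e hM scaleNr.
set t := _ + _ + _ + _.
have -> : t *: 1%:M = block_mx (EE M t 0) (EE M 0 0) (EE M 0 0) (EE M t 0) :> 'M_(n + n).
  by rewrite /EE !scale0r !addr0 !scalemx1 scalar_mx_block.
rewrite /BB tr_block_mx !EET // mulmx_block !(EEM _ _ _ _ hMM) !EED.
by congr (block_mx (EE M _ _) (EE M _ _) (EE M _ _) (EE M _ _)); rewrite /t; ring.
Qed.

Lemma LA_char (R : realType) p N (C : {set 'rV['Z_(p.+2)]_N}) (x : 'rV[R]_N) :
  constructionA C x <->
  exists2 w : 'rV[int]_N, map_mx (fun t : int => (t%:~R : 'Z_(p.+2))) w \in C &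
    x = (Num.sqrt ((p.+2)%:R : R))^-1 *: map_mx (fun t : int => (t%:~R : R)) w.
Proof.
split.
- case=> c cC [z ->]; exists (map_mx (@rho _) c + (Posz p.+2) *: z) => //.
  suff -> : map_mx (fun t : int => (t%:~R : 'Z_(p.+2))) (map_mx (@rho _) c + (Posz p.+2) *: z) = c by [].
  rewrite map_mxD map_mxZ /= qK scale0r addr0.
  by apply/matrixP => i j; rewrite !mxE /rho qrho.
- case=> w wC ->; exists (map_mx (fun t : int => (t%:~R : 'Z_(p.+2))) w) => //.
  exists (map_mx (fun t => (t %/ p.+2)%Z) w).
  congr (_ *: _); congr map_mx; apply/matrixP => i j; rewrite !mxE /rho rhoq.
  by rewrite {1}(divz_eq (w i j) p.+2) addrC mulrC.
Qed.

Lemma ss_inv (R : realType) p :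
  (Num.sqrt ((p.+2)%:R : R))^-1 * (Num.sqrt ((p.+2)%:R : R))^-1 = ((p.+2)%:R)^-1.
Proof. by rewrite -invfM -expr2 sqr_sqrtr ?ler0n. Qed.

Lemma dotR_s (R : realType) p N (w w' : 'rV[int]_N) :
  let s := (Num.sqrt ((p.+2)%:R : R))^-1 in
  dotR (s *: map_mx (fun t : int => (t%:~R : R)) w) (s *: map_mx (fun t : int => (t%:~R : R)) w')
  = (\sum_(i < N) w 0 i * w' 0 i)%:~R / (p.+2)%:R.
Proof.
move=> s; rewrite /dotR rmorph_sum mulr_suml; apply: eq_bigr => i _.
by rewrite !mxE rmorphM /= mulrACA ss_inv mulrC.
Qed.

Lemma zk_dot_map p N (w w' : 'rV[int]_N) :
  zk_dot (map_mx (fun t : int => (t%:~R : 'Z_(p.+2))) w) (map_mx (fun t : int => (t%:~R : 'Z_(p.+2))) w')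
  = (\sum_(i < N) w 0 i * w' 0 i)%:~R.
Proof.
by rewrite /zk_dot rmorph_sum; apply: eq_bigr => i _; rewrite !mxE rmorphM.
Qed.

Lemma unimod (R : realType) p N (C : {set 'rV['Z_(p.+2)]_N}) :
  is_Zk_code C -> self_dual C -> unimodular (constructionA (R:=R) C).
Proof.
move=> [C0 _] sd x.
set s := (Num.sqrt ((p.+2)%:R : R))^-1.
have Kn0 : ((p.+2)%:R : R) != 0 by rewrite pnatr_eq0.
have ssK : s * (s * (p.+2)%:R) = 1 by rewrite mulrA ss_inv mulVf.
split.
- move=> /LA_char [w wC ->] y /LA_char [w' wC' ->].
  rewrite dotR_s.
  have : map_mx (fun t : int => (t%:~R : 'Z_(p.+2))) w \in dual_code C by rewrite -sd.
  rewrite inE => /forall_inP /(_ _ wC'); rewrite zk_dot_map q0 => /dvdzP [j ->].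
  have e : ((Posz p.+2)%:~R : R) = p.+2%:R by [].
  by rewrite intrM e mulfK ?intr_int.
- move=> H.
  have hi i : (s * (p.+2)%:R * x 0 i) \is a Num.int.
    have := H ((s * (p.+2)%:R) *: delta_mx 0 i).
    have -> : dotR x ((s * (p.+2)%:R) *: delta_mx 0 i) = s * (p.+2)%:R * x 0 i.
      rewrite /dotR (bigD1 i) //= big1 => [|j ji]; last by rewrite !mxE (negbTE ji) !mulr0.
      by rewrite !mxE !eqxx mulr1 addr0 mulrC.
    apply; apply/LA_char; exists ((Posz p.+2) *: delta_mx 0 i).
      by rewrite map_mxZ /= qK scale0r.
    by rewrite map_mxZ map_delta_mx scalerA.
  set v := \row_i Num.floor (s * (p.+2)%:R * x 0 i).
  have hx : x = s *: map_mx (fun t : int => (t%:~R : R)) v.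
    apply/matrixP => i j; rewrite (ord1 i) !mxE floorK ?hi //.
    by rewrite mulrA ssK mul1r.
  apply/LA_char; exists v => //.
  rewrite sd inE; apply/forall_inP => c' c'C.
  set w' := map_mx (fun t : 'Z_(p.+2) => Posz (nat_of_ord t)) c'.
  have ew : map_mx (fun t : int => (t%:~R : 'Z_(p.+2))) w' = c'.
    by apply/matrixP => i j; rewrite !mxE qrho.
  rewrite -ew zk_dot_map q0.
  have := H (s *: map_mx (fun t : int => (t%:~R : R)) w').
  rewrite hx dotR_s => /(_ _) /intrP [].
    by apply/LA_char; exists w' => //; rewrite ew.
  move=> j /(congr1 (fun u => u * (p.+2)%:R)); rewrite divfK //.
  rewrite -[X in _ = _ * X]/((Posz p.+2)%:~R) -intrM => /eqP; rewrite eqr_int => /eqP ->.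
  by apply/dvdzP; exists j.
Qed.

Lemma dotR_row (R : realType) m N (A : 'M[R]_(m, N)) i j :
  dotR (row i A) (row j A) = (A *m A^T) i j.
Proof. by rewrite /dotR !mxE; apply: eq_bigr => l _; rewrite !mxE. Qed.

Lemma BB_map (T S : comNzRingType) (f : {rmorphism T -> S}) n (M : 'M[T]_n) a b c d :
  map_mx f (BB M a b c d) = BB (map_mx f M) (f a) (f b) (f c) (f d).
Proof. by rewrite /BB map_block_mx !EE_map !rmorphN. Qed.

Lemma EE_mulM (T : comNzRingType) n (M : 'M[T]_n) a b :
  M *m M = 1%:M -> EE M a b *m M = EE M b a.
Proof.
move=> h; rewrite /EE mulmxDl -!scalemxAl mul1mx h scalemx1 addrC.
by rewrite -scalemx1.
Qed.

Theorem proposition3p6 (R : realType) (k n : nat) (M : 'M[int]_n) (m a b c d : int) :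
  (2 <= k)%N ->
  (forall i j, `|M i j| <= (k./2)%:Z) ->
  M^T = - M ->
  M *m M^T = m%:M ->
  (m = -1 %[mod k%:Z])%Z ->
  (a = d %[mod k%:Z])%Z ->
  (b = c %[mod k%:Z])%Z ->
  let Mk : 'M['Z_k]_n := map_mx (fun t : int => t%:~R) M in
  let C := gen_code (row_mx 1%:M Mk) in
  let MR : 'M[R]_n := map_mx (fun t : int => t%:~R) M in
  let aR : R := a%:~R in let bR : R := b%:~R in
  let cR : R := c%:~R in let dR : R := d%:~R in
  let F : 'M[R]_(n + n) :=
    (Num.sqrt (k%:R : R))^-1 *:
      block_mx (aR%:M + bR *: MR) (cR%:M + dR *: MR)
               (- cR%:M + dR *: MR) (aR%:M - bR *: MR) in
  [/\ is_Zk_code C, self_dual C,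
      unimodular (constructionA (R:=R) C) &
      is_frame (constructionA (R:=R) C)
        ((a ^+ 2 + m * b ^+ 2 + c ^+ 2 + m * d ^+ 2)%:~R / k%:R)
        (fun i => row i F)].
Proof.
case: k => [|[|p]] // _ _ hT hM hm had hbc Mk C MR aR bR cR dR F.
have [h1 h2 h3] := Mk_facts hT hM hm.
have [codeC sdC] := code_props h1 h2 h3.
set s := (Num.sqrt ((p.+2)%:R : R))^-1.
set Bint := BB M a b c d.
have hF : F = s *: map_mx (fun t : int => (t%:~R : R)) Bint.
  rewrite /F /Bint BB_map /BB /EE -/MR -/aR -/bR -/cR -/dR !scalemx1.
  by rewrite !scaleNr raddfN.
split => //; first exact: unimod.
split.
- move=> i; apply/LA_char; exists (row i Bint).
    rewrite map_row /Bint BB_map /BB -/Mk.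
    have e1 : EE Mk c%:~R d%:~R = EE Mk a%:~R b%:~R *m Mk.
      by rewrite EE_mulM // (q_mod hbc) (q_mod had).
    have e2 : EE Mk a%:~R (- b%:~R) = EE Mk (- c%:~R) d%:~R *m Mk.
      by rewrite EE_mulM // (q_mod hbc) (q_mod had).
    rewrite e1 e2.
    set X1 := EE Mk _ _; set X2 := EE Mk _ _.
    have -> : block_mx X1 (X1 *m Mk) X2 (X2 *m Mk) = col_mx X1 X2 *m row_mx 1%:M Mk.
      by rewrite mul_col_row !mulmx1.
    rewrite row_mul.
    by apply/in_gen; eexists.
  by rewrite hF; apply/matrixP => u v; rewrite !mxE.
- move=> i j; rewrite dotR_row hF.
  have hT' : MR^T = - MR by rewrite /MR map_trmx hT map_mxN.
  have hM' : MR *m MR^T = (m%:~R : R) *: 1%:M.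
    by rewrite /MR map_trmx -map_mxM hM map_scalar_mx scalemx1.
  rewrite linearZ /= -scalemxAl -scalemxAr scalerA /Bint BB_map -/MR (BB_gram _ _ _ _ hT' hM').
  rewrite !mxE ss_inv; case: eqP => _; last by rewrite !mulr0.
  rewrite mulr1 mulrC; congr (_ / _).
  by rewrite !rmorphD !rmorphM /= !expr2.
Qed.
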